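(* Let $\alpha\neq0$ and $u_0>0$ be real numbers. The initial value problem $$\left(r\frac{u'}{\sqrt{1-u'^2}}\right)'=r\frac{\alpha}{u\sqrt{1-u'^2}}\quad\text{for } r\in(0,\delta),\qquad u(0)=u_0,\quad u'(0)=0,$$ has a solution $u\in C^2([0,\delta])$ for some $\delta>0$, and this solution depends continuously on the initial data. *)

(* Defs.v *)
From Stdlib Require Import Reals.
From Coquelicot Require Import Coquelicot.
Open Scope R_scope.

Definition Icc (a b : R) (x : R) : Prop := a <= x <= b.

Definition has_deriv_within (D : R -> Prop) (f : R -> R) (x l : R) : Prop :=
  filterlim (fun y => (f y - f x) / (y - x))
    (within (fun y => D y /\ y <> x) (locally x)) (locally l).

Definition continuous_within (D : R -> Prop) (g : R -> R) (x : R) : Prop :=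
  filterlim g (within D (locally x)) (locally (g x)).

Definition C2_on (a b : R) (u u1 u2 : R -> R) : Prop :=
  forall x, Icc a b x ->
    has_deriv_within (Icc a b) u x (u1 x) /\
    has_deriv_within (Icc a b) u1 x (u2 x) /\
    continuous_within (Icc a b) u2 x.

(* u (with derivative u1) is a C^2([0,delta]) solution of
     (r u'/sqrt(1-u'^2))' = r alpha / (u sqrt(1-u'^2))   on (0,delta),
     u(0) = u0, u'(0) = 0.
   The expressions make sense: u > 0 and |u'| < 1 on [0,delta]. *)
Definition is_solution (alpha u0 delta : R) (u u1 : R -> R) : Prop :=
  (exists u2, C2_on 0 delta u u1 u2) /\
  (forall r, Icc 0 delta r -> 0 < u r /\ Rabs (u1 r) < 1) /\
  (forall r, 0 < r < delta ->
     is_derive (fun s => s * u1 s / sqrt (1 - (u1 s) ^ 2)) r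
               (r * alpha / (u r * sqrt (1 - (u1 r) ^ 2)))) /\
  u 0 = u0 /\ u1 0 = 0.

(* Main.v *)
From Stdlib Require Import Reals Lra Lia.
From Coquelicot Require Import Coquelicot.
Open Scope R_scope.
Require Import Defs.

Lemma ballR x e y : ball x e y <-> Rabs (y - x) < e.
Proof. reflexivity. Qed.

Lemma cont_eps (f : R -> R) x :
  continuous f x <-> forall eps, 0 < eps -> exists d, 0 < d /\ forall y, Rabs (y - x) < d -> Rabs (f y - f x) < eps.
Proof.
  split.
  - intros H eps He. apply filterlim_locally with (eps := mkposreal eps He) in H.
    destruct H as [d Hd]. exists d. split; [apply cond_pos|]. intros y Hy. apply (Hd y Hy).
  - intros H. apply filterlim_locally. intros eps. destruct (H eps (cond_pos eps)) as [d [Hd H']].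
    exists (mkposreal d Hd). intros y Hy. apply H'. apply Hy.
Qed.
Lemma cont_mult (f g : R->R) x : continuous f x -> continuous g x -> continuous (fun y => f y * g y) x.
Proof. intros. apply (continuous_mult (K:=R_AbsRing) f g x); auto. Qed.
Lemma cont_minus (f g : R->R) x : continuous f x -> continuous g x -> continuous (fun y => f y - g y) x.
Proof. intros. apply (continuous_minus (V:=R_NormedModule) f g x); auto. Qed.
Lemma cont_plus (f g : R->R) x : continuous f x -> continuous g x -> continuous (fun y => f y + g y) x.
Proof. intros. apply (continuous_plus (V:=R_NormedModule) f g x); auto. Qed.
Lemma cont_id x : continuous (fun y : R => y) x.
Proof. apply continuous_id. Qed.
Lemma cont_const (c : R) x : continuous (fun _ : R => c) x.
Proof. apply continuous_const. Qed.

Lemma RInt_bound (f : R -> R) r K :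
  (forall s, Rabs s <= Rabs r -> continuous f s) ->
  (forall s, Rabs s <= Rabs r -> Rabs (f s) <= K) ->
  Rabs (RInt f 0 r) <= Rabs r * K.
Proof.
  intros Hc Hb.
  assert (Hex : ex_RInt f 0 r).
  { apply (ex_RInt_continuous (V:=R_CompleteNormedModule)). intros z Hz. apply Hc.
    unfold Rmin, Rmax in Hz. destruct (Rle_dec 0 r); unfold Rabs; repeat destruct Rcase_abs; lra. }
  destruct (Rle_dec 0 r) as [Hr|Hr].
  - replace (Rabs r) with (r - 0) by (rewrite Rabs_right; lra).
    apply abs_RInt_le_const; auto. intros t Ht. apply Hb. unfold Rabs; repeat destruct Rcase_abs; lra.
  - assert (Hex' : ex_RInt f r 0) by (apply ex_RInt_swap; exact Hex).
    rewrite <- opp_RInt_swap by exact Hex'.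
    change (Rabs (- RInt f r 0) <= Rabs r * K). rewrite Rabs_Ropp.
    replace (Rabs r) with (0 - r) by (rewrite Rabs_left; lra).
    apply abs_RInt_le_const; auto; try lra. intros t Ht. apply Hb. unfold Rabs; repeat destruct Rcase_abs; lra.
Qed.

Lemma RInt_deriv (f : R -> R) Rr x :
  (forall s, Rabs s < Rr -> continuous f s) -> Rabs x < Rr ->
  is_derive (fun y => RInt f 0 y) x (f x).
Proof.
  intros Hc Hx. apply (is_derive_RInt (V:=R_NormedModule) f (fun y => RInt f 0 y) 0 x); [|apply Hc; exact Hx].
  assert (He : 0 < Rr - Rabs x) by lra.
  exists (mkposreal _ He). intros b Hb. change (Rabs (b - x) < Rr - Rabs x) in Hb.
  apply (RInt_correct (V:=R_CompleteNormedModule)). apply (ex_RInt_continuous (V:=R_CompleteNormedModule)). intros z Hz. apply Hc.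
  unfold Rmin, Rmax in Hz. destruct (Rle_dec 0 b); revert Hb Hx Hz; unfold Rabs; repeat destruct Rcase_abs; lra.
Qed.

Lemma cont_lip (H P U : R -> R) L x : 0 <= L ->
  (forall y, Rabs (H y - H x) <= L * (Rabs (P y - P x) + Rabs (U y - U x))) ->
  continuous P x -> continuous U x -> continuous H x.
Proof.
  intros HL Hl HP HU. apply cont_eps. intros eps He.
  rewrite cont_eps in HP, HU.
  assert (He' : 0 < eps / (2 * (L + 1))) by (apply Rdiv_lt_0_compat; lra).
  destruct (HP _ He') as [d1 [Hd1 H1]]. destruct (HU _ He') as [d2 [Hd2 H2]].
  exists (Rmin d1 d2). split; [apply Rmin_glb_lt; auto|].
  intros y Hy. assert (A1 := H1 y (Rlt_le_trans _ _ _ Hy (Rmin_l _ _))).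
  assert (A2 := H2 y (Rlt_le_trans _ _ _ Hy (Rmin_r _ _))).
  eapply Rle_lt_trans; [apply Hl|].
  apply Rle_lt_trans with (L * (2 * (eps / (2 * (L + 1))))).
  - apply Rmult_le_compat_l; lra.
  - replace (L * (2 * (eps / (2 * (L + 1))))) with (eps - eps / (L + 1)) by (field; lra).
    assert (0 < eps / (L+1)) by (apply Rdiv_lt_0_compat; lra). lra.
Qed.

Lemma lim_bound (x : nat -> R) (l a K : R) :
  is_lim_seq x l -> (forall n, Rabs (x n - a) <= K) -> Rabs (l - a) <= K.
Proof.
  intros Hl Hb.
  assert (H1 : is_lim_seq (fun n => Rabs (x n - a)) (Rabs (l - a))).
  { apply (is_lim_seq_abs _ (Finite (l - a))). apply is_lim_seq_minus'; auto. apply is_lim_seq_const. }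
  assert (H2 := is_lim_seq_le _ _ _ _ Hb H1 (is_lim_seq_const K)). exact H2.
Qed.

Lemma geom_lim (x : nat -> R) :
  (forall n, Rabs (x (S n) - x n) <= (/2)^n) ->
  exists l : R, is_lim_seq x l /\ forall n, Rabs (x n - l) <= 2 * (/2)^n.
Proof.
  intros Hx.
  assert (Hs : forall n m, Rabs (x (n + m)%nat - x n) <= 2 * ((/2)^n - (/2)^(n+m))).
  { intros n m. induction m.
    - rewrite Nat.add_0_r. unfold Rminus. rewrite Rplus_opp_r, Rabs_R0. lra.
    - replace (n + S m)%nat with (S (n + m)) by lia.
      eapply Rle_trans; [|apply Rle_trans with (Rabs (x (S (n+m)) - x (n+m)%nat) + Rabs (x (n+m)%nat - x n))].
      + apply Rle_refl.
      + replace (x (S (n + m)) - x n) with ((x (S (n+m)) - x (n+m)%nat) + (x (n+m)%nat - x n)) by ring.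
        apply Rabs_triang.
      + specialize (Hx (n+m)%nat). simpl. lra. }
  assert (Hs' : forall n m, Rabs (x (n + m)%nat - x n) <= 2 * (/2)^n).
  { intros n m. eapply Rle_trans; [apply Hs|]. assert (0 < (/2)^(n+m)) by (apply pow_lt; lra). lra. }
  assert (Hc : ex_lim_seq_cauchy x).
  { intros eps. assert (Ha : Rabs (/2) < 1) by (rewrite Rabs_right; lra).
    assert (He : 0 < eps / 4) by (generalize (cond_pos eps); lra).
    destruct (pow_lt_1_zero _ Ha _ He) as [N HN].
    exists N. intros n m Hn Hm.
    specialize (HN N (le_n N)). rewrite Rabs_right in HN by (apply Rle_ge, pow_le; lra).
    assert (A1 := Hs' N (n - N)%nat). assert (A2 := Hs' N (m - N)%nat).
    replace (N + (n - N))%nat with n in A1 by lia. replace (N + (m - N))%nat with m in A2 by lia.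
    replace (x n - x m) with ((x n - x N) - (x m - x N)) by ring.
    eapply Rle_lt_trans; [apply Rabs_triang|]. rewrite Rabs_Ropp. lra. }
  apply ex_lim_seq_cauchy_corr in Hc. destruct Hc as [l Hl].
  exists l. split; auto. intros n. rewrite Rabs_minus_sym.
  apply (lim_bound (fun m => x (m + n)%nat)).
  - apply (is_lim_seq_incr_n x n l). exact Hl.
  - intros m. rewrite Nat.add_comm. apply Hs'.
Qed.

Lemma unif_cont (f : nat -> R -> R) (h : R -> R) x e C : 0 < e ->
  (forall n, continuous (f n) x) ->
  (forall n y, Rabs (y - x) < e -> Rabs (f n y - h y) <= C * (/2)^n) ->
  continuous h x.
Proof.
  intros He Hc Hb. apply cont_eps. intros eps Heps.
  assert (Ha : Rabs (/2) < 1) by (rewrite Rabs_right; lra).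
  assert (Hy : 0 < eps / (3 * (Rabs C + 1))) by (apply Rdiv_lt_0_compat; generalize (Rabs_pos C); lra).
  destruct (pow_lt_1_zero _ Ha _ Hy) as [N HN]. specialize (HN N (le_n N)).
  rewrite Rabs_right in HN by (apply Rle_ge, pow_le; lra).
  assert (HC : C * (/2)^N < eps / 3).
  { assert (0 < (/2)^N) by (apply pow_lt; lra).
    apply Rle_lt_trans with (Rabs C * (/2)^N).
    - apply Rmult_le_compat_r; [lra|apply Rle_abs].
    - apply Rlt_le_trans with ((Rabs C + 1) * (eps / (3 * (Rabs C + 1)))).
      + generalize (Rabs_pos C); nra.
      + right. field. generalize (Rabs_pos C); lra. }
  assert (Hf := Hc N). rewrite cont_eps in Hf. destruct (Hf (eps/3) ltac:(lra)) as [d [Hd Hfd]].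
  exists (Rmin d e). split; [apply Rmin_glb_lt; auto|].
  intros y Hyx.
  assert (A1 := Hfd y (Rlt_le_trans _ _ _ Hyx (Rmin_l _ _))).
  assert (A2 := Hb N y (Rlt_le_trans _ _ _ Hyx (Rmin_r _ _))).
  assert (A3 := Hb N x ltac:(unfold Rminus; rewrite Rplus_opp_r, Rabs_R0; lra)).
  replace (h y - h x) with (-(f N y - h y) + (f N y - f N x) + (f N x - h x)) by ring.
  eapply Rle_lt_trans; [apply Rabs_triang|]. eapply Rle_lt_trans; [apply Rplus_le_compat_r, Rabs_triang|].
  rewrite Rabs_Ropp. lra.
Qed.

Lemma deriv_within (D : R -> Prop) f x l : is_derive f x l -> has_deriv_within D f x l.
Proof.
  intros H. apply is_derive_Reals in H. unfold has_deriv_within.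
  apply filterlim_locally. intros eps. destruct (H eps (cond_pos eps)) as [d Hd].
  exists d. intros y Hy [_ Hyx]. change (Rabs (y - x) < d) in Hy.
  change (Rabs ((f y - f x) / (y - x) - l) < eps).
  replace y with (x + (y - x)) at 1 by ring. apply Hd; auto. lra.
Qed.

Lemma cont_within (D : R -> Prop) g x : continuous g x -> continuous_within D g x.
Proof.
  intros H. unfold continuous_within. eapply filterlim_filter_le_1; [|exact H].
  apply filter_le_within.
Qed.

Lemma RInt_lin c y : RInt (fun s => s * c) 0 y = c * (y * y) / 2.
Proof.
  apply is_RInt_unique.
  replace (c * (y * y) / 2) with (minus (c * (y*y)/2) (c * (0*0)/2)).
  2:{ unfold minus, plus, opp; simpl. field. }
  apply (is_RInt_derive (V:=R_CompleteNormedModule) (fun s => c * (s*s)/2)).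
  - intros z _. auto_derive; auto. field.
  - intros z _. apply cont_mult; [apply cont_id|apply cont_const].
Qed.

Lemma avg_lim (F : R -> R) Rr : 0 < Rr -> (forall s, Rabs s < Rr -> continuous F s) ->
  forall eps, 0 < eps -> exists d, 0 < d /\ forall y, y <> 0 -> Rabs y < d ->
    Rabs (RInt (fun s => s * F s) 0 y / (y * y) - F 0 / 2) < eps.
Proof.
  intros HR Hc eps He.
  assert (H0 := Hc 0 ltac:(rewrite Rabs_R0; lra)). rewrite cont_eps in H0.
  destruct (H0 (eps/2) ltac:(lra)) as [d0 [Hd0 Hd0']].
  exists (Rmin d0 Rr). split; [apply Rmin_glb_lt; auto|]. intros y Hy Hyd.
  assert (Hy1 := Rlt_le_trans _ _ _ Hyd (Rmin_l _ _)).
  assert (Hy2 := Rlt_le_trans _ _ _ Hyd (Rmin_r _ _)).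
  assert (Hcs : forall s, Rabs s <= Rabs y -> continuous (fun s => s * F s) s).
  { intros s Hs. apply (cont_mult (fun s => s) F); [apply cont_id|apply Hc; lra]. }
  assert (Hcs2 : forall s, Rabs s <= Rabs y -> continuous (fun s => s * F 0) s).
  { intros s Hs. apply (cont_mult (fun s => s) (fun _ => F 0)); [apply cont_id|apply cont_const]. }
  assert (Hex : forall g : R -> R, (forall s, Rabs s <= Rabs y -> continuous g s) -> ex_RInt g 0 y).
  { intros g Hg. apply (ex_RInt_continuous (V:=R_CompleteNormedModule)). intros z Hz. apply Hg.
    unfold Rmin, Rmax in Hz. destruct (Rle_dec 0 y); revert Hz; unfold Rabs; repeat destruct Rcase_abs; lra. }
  assert (E : RInt (fun s => s * F s) 0 y = RInt (fun s => s * F s - s * F 0) 0 y + F 0 * (y * y) / 2).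
  { rewrite <- RInt_lin.
    assert (E2 : RInt (fun s => s * F s - s * F 0) 0 y = RInt (fun s => s * F s) 0 y - RInt (fun s => s * F 0) 0 y)
      by exact (RInt_minus (V:=R_CompleteNormedModule) (fun s => s * F s) (fun s => s * F 0) 0 y (Hex _ Hcs) (Hex _ Hcs2)).
    lra. }
  assert (B : Rabs (RInt (fun s => s * F s - s * F 0) 0 y) <= Rabs y * (Rabs y * (eps / 2))).
  { apply RInt_bound.
    - intros s Hs. apply (cont_minus (fun s => s * F s) (fun s => s * F 0)); auto.
    - intros s Hs. replace (s * F s - s * F 0) with (s * (F s - F 0)) by ring. rewrite Rabs_mult.
      apply Rmult_le_compat; try apply Rabs_pos; auto.
      destruct (Req_dec s 0) as [->|Hs0].
      + unfold Rminus. rewrite Rplus_opp_r, Rabs_R0. lra.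
      + left. apply Hd0'. rewrite Rminus_0_r. lra. }
  rewrite E.
  assert (Hyy : 0 < y * y) by nra.
  replace ((RInt (fun s => s * F s - s * F 0) 0 y + F 0 * (y * y) / 2) / (y * y) - F 0 / 2)
    with (RInt (fun s => s * F s - s * F 0) 0 y / (y * y)) by (field; auto).
  unfold Rdiv. rewrite Rabs_mult, Rabs_inv, (Rabs_right (y*y)) by lra.
  apply Rmult_lt_reg_r with (y*y); auto.
  rewrite Rmult_assoc, Rinv_l by lra.
  assert (Rabs y * Rabs y = y * y) by (rewrite <- Rabs_mult; apply Rabs_right; lra). nra.
Qed.

Definition hq (p : R) := sqrt (1 + p ^ 2).
Definition gq (p : R) := p / hq p.
Definition clp (p : R) := Rmax (-1) (Rmin p 1).

Lemma hq_facts p : hq p * hq p = 1 + p * p /\ 1 <= hq p /\ Rabs p <= hq p.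
Proof.
  unfold hq. assert (H0 : 0 <= 1 + p^2) by (simpl; nra).
  assert (E : sqrt (1 + p^2) * sqrt (1 + p^2) = 1 + p * p) by (rewrite sqrt_sqrt; [ring|auto]).
  assert (H1 : 1 <= sqrt (1 + p^2)).
  { apply Rle_trans with (sqrt 1); [rewrite sqrt_1; lra|]. apply sqrt_le_1_alt. simpl; nra. }
  split; [auto|split; auto].
  assert (Rabs p * Rabs p = p * p) by (rewrite <- Rabs_mult; apply Rabs_right; nra).
  generalize (Rabs_pos p). nra.
Qed.

Lemma hq_lip a b : Rabs (hq a - hq b) <= Rabs (a - b).
Proof.
  destruct (hq_facts a) as [A2 [A1 Aa]]. destruct (hq_facts b) as [B2 [B1 Bb]].
  set (A := hq a) in *. set (B := hq b) in *.
  assert (E : (A - B) * (A + B) = (a - b) * (a + b)) by nra.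
  assert (Hab : Rabs (a + b) <= A + B) by (eapply Rle_trans; [apply Rabs_triang|lra]).
  assert (E2 : Rabs (A - B) * (A + B) = Rabs (a - b) * Rabs (a + b)).
  { rewrite <- (Rabs_right (A + B)) at 1 by lra. rewrite <- !Rabs_mult. rewrite E. reflexivity. }
  apply Rmult_le_reg_r with (A + B); [lra|]. rewrite E2.
  apply Rmult_le_compat_l; [apply Rabs_pos|auto].
Qed.

Lemma gq_bound p : Rabs (gq p) < 1.
Proof.
  destruct (hq_facts p) as [A2 [A1 Aa]]. unfold gq. unfold Rdiv. rewrite Rabs_mult, Rabs_inv, (Rabs_right (hq p)) by lra.
  apply Rmult_lt_reg_r with (hq p); [lra|]. rewrite Rmult_assoc, Rinv_l by lra.
  assert (Rabs p < hq p).
  { assert (Rabs p * Rabs p = p * p) by (rewrite <- Rabs_mult; apply Rabs_right; nra).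
    generalize (Rabs_pos p). nra. }
  lra.
Qed.

Lemma gq_lip a b : Rabs (gq a - gq b) <= 2 * Rabs (a - b).
Proof.
  destruct (hq_facts a) as [A2 [A1 Aa]]. destruct (hq_facts b) as [B2 [B1 Bb]].
  assert (Hl := hq_lip b a).
  unfold gq. set (A := hq a) in *. set (B := hq b) in *.
  replace (a / A - b / B) with ((a * (B - A) + (a - b) * A) / (A * B)) by (field; lra).
  unfold Rdiv. rewrite Rabs_mult, Rabs_inv, (Rabs_right (A * B)) by nra.
  apply Rmult_le_reg_r with (A * B); [nra|]. rewrite Rmult_assoc, Rinv_l, Rmult_1_r by nra.
  eapply Rle_trans; [apply Rabs_triang|]. rewrite !Rabs_mult, (Rabs_right A) by lra.
  rewrite (Rabs_minus_sym b a) in Hl.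
  assert (Rabs a * Rabs (B - A) <= A * Rabs (a - b)) by (apply Rmult_le_compat; auto using Rabs_pos).
  assert (0 <= Rabs (a - b)) by apply Rabs_pos. assert (0 <= A * Rabs (a - b) * (B - 1)) by (apply Rmult_le_pos; [apply Rmult_le_pos|]; lra). nra.
Qed.

Lemma clp_lip a b : Rabs (clp a - clp b) <= Rabs (a - b).
Proof. unfold clp, Rmax, Rmin. repeat destruct Rle_dec; unfold Rabs; repeat destruct Rcase_abs; lra. Qed.

Lemma clp_id p : Rabs p <= 1 -> clp p = p.
Proof. unfold clp, Rmax, Rmin. intros H. repeat destruct Rle_dec; revert H; unfold Rabs; repeat destruct Rcase_abs; lra. Qed.

Lemma clp_bound p : Rabs (clp p) <= 1.
Proof. unfold clp, Rmax, Rmin. repeat destruct Rle_dec; unfold Rabs; repeat destruct Rcase_abs; lra. Qed.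

Lemma rmax_lip a b c : Rabs (Rmax a c - Rmax b c) <= Rabs (a - b).
Proof. unfold Rmax. repeat destruct Rle_dec; unfold Rabs; repeat destruct Rcase_abs; lra. Qed.
Definition cc (u0 : R) := u0 / 4.
Definition Fv (alpha u0 p u : R) := alpha * hq (clp p) / Rmax u (cc u0).
Definition Fq (alpha u0 : R) (P U : R -> R) (s : R) := Fv alpha u0 (P s) (U s).
Definition MM (alpha u0 : R) := 2 * Rabs alpha / cc u0.
Definition LL (alpha u0 : R) := Rabs alpha * (/ cc u0 + 2 / (cc u0 * cc u0)).

Lemma hq_le2 p : Rabs p <= 1 -> hq p <= 2.
Proof.
  intros H. destruct (hq_facts p) as [E [H1 _]].
  assert (Rabs p * Rabs p = p * p) by (rewrite <- Rabs_mult; apply Rabs_right; nra).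
  generalize (Rabs_pos p). nra.
Qed.

Lemma Fv_bound alpha u0 p u : 0 < u0 -> Rabs (Fv alpha u0 p u) <= MM alpha u0.
Proof.
  intros Hu. unfold Fv, MM, cc.
  assert (Hc : u0 / 4 <= Rmax u (u0/4)) by apply Rmax_r.
  assert (H2 := hq_le2 _ (clp_bound p)). destruct (hq_facts (clp p)) as [_ [H1 _]].
  unfold Rdiv. rewrite !Rabs_mult, Rabs_inv, (Rabs_right (hq _)), (Rabs_right (Rmax _ _)) by lra.
  assert (/ Rmax u (u0 * / 4) <= / (u0 * / 4)) by (apply Rinv_le_contravar; lra).
  assert (0 < / Rmax u (u0 * / 4)) by (apply Rinv_0_lt_compat; lra).
  assert (HA := Rabs_pos alpha).
  apply Rmult_le_compat; try nra. 
Qed.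

Lemma Fv_lip alpha u0 p u p' u' : 0 < u0 ->
  Rabs (Fv alpha u0 p u - Fv alpha u0 p' u') <= LL alpha u0 * (Rabs (p - p') + Rabs (u - u')).
Proof.
  intros Hu. unfold Fv, LL. set (c := cc u0).
  assert (Hc : 0 < c) by (unfold c, cc; lra).
  set (H := hq (clp p)). set (H' := hq (clp p')). set (I := Rmax u c). set (I' := Rmax u' c).
  assert (HI : c <= I) by apply Rmax_r. assert (HI' : c <= I') by apply Rmax_r.
  assert (HH' : H' <= 2) by apply (hq_le2 _ (clp_bound p')).
  assert (HH1' : 1 <= H') by apply (hq_facts (clp p')).
  assert (LH : Rabs (H - H') <= Rabs (p - p')) by (eapply Rle_trans; [apply hq_lip|apply clp_lip]).
  assert (LI : Rabs (I' - I) <= Rabs (u - u')) by (rewrite Rabs_minus_sym; apply rmax_lip).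
  replace (alpha * H / I - alpha * H' / I') with (alpha * ((H - H') * / I + H' * (I' - I) * / (I * I'))) by (field; lra).
  rewrite Rabs_mult, (Rmult_assoc (Rabs alpha)). apply Rmult_le_compat_l; [apply Rabs_pos|].
  eapply Rle_trans; [apply Rabs_triang|]. rewrite !Rabs_mult, !Rabs_inv.
  rewrite (Rabs_right I), (Rabs_right H'), (Rabs_right (I * I')) by nra.
  assert (A1 : / I <= / c) by (apply Rinv_le_contravar; lra).
  assert (A2 : / (I * I') <= / (c * c)) by (apply Rinv_le_contravar; nra).
  assert (0 < / I) by (apply Rinv_0_lt_compat; lra).
  assert (0 < / (I * I')) by (apply Rinv_0_lt_compat; nra).
  assert (0 < / c) by (apply Rinv_0_lt_compat; lra).
  assert (0 < / (c * c)) by (apply Rinv_0_lt_compat; nra).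
  assert (B1 : Rabs (H - H') * / I <= Rabs (p - p') * / c) by (apply Rmult_le_compat; auto using Rabs_pos; lra).
  assert (B2 : H' * Rabs (I' - I) * / (I * I') <= 2 * Rabs (u - u') * / (c * c)).
  { apply Rmult_le_compat; try lra. apply Rmult_le_pos; [lra|apply Rabs_pos].
    apply Rmult_le_compat; try lra; apply Rabs_pos. }
  unfold Rdiv. generalize (Rabs_pos (p - p')) (Rabs_pos (u - u')). nra.
Qed.

Definition stepU (v : R) (P : R -> R) := fun r => v + RInt (fun s => gq (P s)) 0 r.
Definition stepP (alpha u0 : R) (P U : R -> R) := fun r => RInt (fun s => s * Fq alpha u0 P U s) 0 r / r.
Fixpoint it (alpha u0 v : R) (n : nat) : (R -> R) * (R -> R) :=
  match n with
  | O => (fun _ => v, fun _ => 0)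
  | S n => (stepU v (snd (it alpha u0 v n)), stepP alpha u0 (snd (it alpha u0 v n)) (fst (it alpha u0 v n)))
  end.

Lemma LL_pos alpha u0 : 0 < u0 -> 0 <= LL alpha u0.
Proof.
  intros Hu. unfold LL, cc. apply Rmult_le_pos; [apply Rabs_pos|].
  assert (0 < / (u0/4)) by (apply Rinv_0_lt_compat; lra).
  assert (0 < 2 / (u0/4 * (u0/4))) by (apply Rdiv_lt_0_compat; nra). lra.
Qed.

Lemma cont_gq (P : R -> R) (x : R) : continuous P x -> continuous (fun s => gq (P s)) x.
Proof.
  intros H. apply (cont_lip _ P P 2); auto; try lra.
  intros y. eapply Rle_trans; [apply gq_lip|]. generalize (Rabs_pos (P y - P x)); lra.
Qed.

Lemma cont_Fq alpha u0 (P U : R -> R) (x : R) : 0 < u0 -> continuous P x -> continuous U x ->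
  continuous (Fq alpha u0 P U) x.
Proof.
  intros Hu HP HU. apply (cont_lip _ P U (LL alpha u0)); auto using LL_pos.
  intros y. unfold Fq. apply Fv_lip; auto.
Qed.

Lemma cont_sF alpha u0 (P U : R -> R) (x : R) : 0 < u0 -> continuous P x -> continuous U x ->
  continuous (fun s => s * Fq alpha u0 P U s) x.
Proof. intros. apply cont_mult; [apply cont_id|apply cont_Fq; auto]. Qed.

Lemma deriv_cont (f : R -> R) x l : is_derive f x l -> continuous f x.
Proof. intros H. apply (ex_derive_continuous (K:=R_AbsRing) (V:=R_NormedModule)). exists l. exact H. Qed.

Lemma RInt_cont (f : R -> R) x : (forall s, continuous f s) -> continuous (fun y => RInt f 0 y) x.
Proof.
  intros H. eapply deriv_cont. apply (RInt_deriv f (Rabs x + 1)); auto; lra.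
Qed.

Lemma stepU_cont v (P : R -> R) : (forall x, continuous P x) -> forall x, continuous (stepU v P) x.
Proof.
  intros H x. unfold stepU. apply cont_plus; [apply cont_const|].
  apply RInt_cont. intros s. apply cont_gq; auto.
Qed.

Lemma stepU_bound v (P : R -> R) : (forall x, continuous P x) -> forall r, Rabs (stepU v P r - v) <= Rabs r.
Proof.
  intros H r. unfold stepU. replace (v + RInt (fun s => gq (P s)) 0 r - v) with (RInt (fun s => gq (P s)) 0 r) by lra.
  rewrite <- (Rmult_1_r (Rabs r)). apply RInt_bound.
  - intros s _. apply cont_gq; auto.
  - intros s _. left. apply gq_bound.
Qed.

Lemma div_bound (a r K : R) : Rabs a <= Rabs r * (Rabs r * K) -> Rabs (a / r) <= Rabs r * K.
Proof.
  intros H. destruct (Req_dec r 0) as [->|Hr].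
  - unfold Rdiv. rewrite Rinv_0, Rmult_0_r, Rabs_R0. rewrite Rabs_R0 in *. lra.
  - unfold Rdiv. rewrite Rabs_mult, Rabs_inv.
    assert (0 < Rabs r) by (apply Rabs_pos_lt; auto).
    apply Rmult_le_reg_r with (Rabs r); auto. rewrite Rmult_assoc, Rinv_l, Rmult_1_r by lra. lra.
Qed.

Lemma stepP_bound alpha u0 (P U : R -> R) : 0 < u0 -> (forall x, continuous P x) -> (forall x, continuous U x) ->
  forall r, Rabs (stepP alpha u0 P U r) <= MM alpha u0 * Rabs r.
Proof.
  intros Hu HP HU r. unfold stepP. rewrite Rmult_comm. apply div_bound. apply RInt_bound.
  - intros s _. apply cont_sF; auto.
  - intros s Hs. rewrite Rabs_mult. apply Rmult_le_compat; auto using Rabs_pos.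
    unfold Fq. apply Fv_bound; auto.
Qed.

Lemma stepP_cont alpha u0 (P U : R -> R) : 0 < u0 -> (forall x, continuous P x) -> (forall x, continuous U x) ->
  forall x, continuous (stepP alpha u0 P U) x.
Proof.
  intros Hu HP HU x. destruct (Req_dec x 0) as [->|Hx].
  - apply cont_eps. intros eps He.
    assert (HM : 0 <= MM alpha u0) by (eapply Rle_trans; [apply Rabs_pos|apply (Fv_bound alpha u0 0 0 Hu)]).
    exists (eps / (MM alpha u0 + 1)). split; [apply Rdiv_lt_0_compat; lra|].
    intros y Hy. rewrite Rminus_0_r in Hy.
    assert (E0 : stepP alpha u0 P U 0 = 0) by (unfold stepP; rewrite RInt_point; unfold Rdiv; rewrite Rinv_0; apply Rmult_0_r).
    rewrite E0, Rminus_0_r. eapply Rle_lt_trans; [apply stepP_bound; auto|].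
    apply Rle_lt_trans with (MM alpha u0 * (eps / (MM alpha u0 + 1))).
    + apply Rmult_le_compat_l; lra.
    + replace (MM alpha u0 * (eps / (MM alpha u0 + 1))) with (eps - eps / (MM alpha u0 + 1)) by (field; lra).
      assert (0 < eps / (MM alpha u0 + 1)) by (apply Rdiv_lt_0_compat; lra). lra.
  - unfold stepP. apply (cont_mult (fun r => RInt (fun s => s * Fq alpha u0 P U s) 0 r) (fun r => / r)).
    + apply RInt_cont. intros s. apply cont_sF; auto.
    + apply continuous_Rinv; auto.
Qed.

Lemma ex_RInt_loc (f : R -> R) r : (forall s, Rabs s <= Rabs r -> continuous f s) -> ex_RInt f 0 r.
Proof.
  intros Hg. apply (ex_RInt_continuous (V:=R_CompleteNormedModule)). intros z Hz. apply Hg.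
  unfold Rmin, Rmax in Hz. destruct (Rle_dec 0 r); revert Hz; unfold Rabs; repeat destruct Rcase_abs; lra.
Qed.

Lemma RInt_minusR (f g : R -> R) r : (forall s, Rabs s <= Rabs r -> continuous f s) ->
  (forall s, Rabs s <= Rabs r -> continuous g s) ->
  RInt (fun s => f s - g s) 0 r = RInt f 0 r - RInt g 0 r.
Proof.
  intros Hf Hg. exact (RInt_minus (V:=R_CompleteNormedModule) f g 0 r (ex_RInt_loc f r Hf) (ex_RInt_loc g r Hg)).
Qed.

Lemma stepU_diff v v' (P P' : R -> R) r e :
  (forall s, Rabs s <= Rabs r -> continuous P s) -> (forall s, Rabs s <= Rabs r -> continuous P' s) ->
  (forall s, Rabs s <= Rabs r -> Rabs (P s - P' s) <= e) ->
  Rabs (stepU v P r - stepU v' P' r) <= Rabs (v - v') + Rabs r * (2 * e).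
Proof.
  intros HP HP' Hb. unfold stepU.
  replace (v + RInt (fun s => gq (P s)) 0 r - (v' + RInt (fun s => gq (P' s)) 0 r))
    with ((v - v') + (RInt (fun s => gq (P s)) 0 r - RInt (fun s => gq (P' s)) 0 r)) by lra.
  eapply Rle_trans; [apply Rabs_triang|]. apply Rplus_le_compat_l.
  rewrite <- RInt_minusR by (intros s Hs; apply cont_gq; auto).
  apply RInt_bound.
  - intros s Hs. apply cont_minus; apply cont_gq; auto.
  - intros s Hs. eapply Rle_trans; [apply gq_lip|]. specialize (Hb s Hs). lra.
Qed.

Lemma stepP_diff alpha u0 (P U P' U' : R -> R) r e1 e2 : 0 < u0 ->
  (forall s, Rabs s <= Rabs r -> continuous P s /\ continuous U s /\ continuous P' s /\ continuous U' s) ->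
  (forall s, Rabs s <= Rabs r -> Rabs (P s - P' s) <= e1 /\ Rabs (U s - U' s) <= e2) ->
  Rabs (stepP alpha u0 P U r - stepP alpha u0 P' U' r) <= Rabs r * (LL alpha u0 * (e1 + e2)).
Proof.
  intros Hu Hc Hb. unfold stepP.
  replace (RInt (fun s => s * Fq alpha u0 P U s) 0 r / r - RInt (fun s => s * Fq alpha u0 P' U' s) 0 r / r)
    with ((RInt (fun s => s * Fq alpha u0 P U s) 0 r - RInt (fun s => s * Fq alpha u0 P' U' s) 0 r) / r)
    by (unfold Rdiv; ring).
  apply div_bound.
  rewrite <- RInt_minusR by (intros s Hs; destruct (Hc s Hs) as [? [? [? ?]]]; apply cont_sF; auto).
  apply RInt_bound.
  - intros s Hs. destruct (Hc s Hs) as [? [? [? ?]]]. apply cont_minus; apply cont_sF; auto.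
  - intros s Hs. replace (s * Fq alpha u0 P U s - s * Fq alpha u0 P' U' s) with (s * (Fq alpha u0 P U s - Fq alpha u0 P' U' s)) by ring.
    rewrite Rabs_mult. apply Rmult_le_compat; auto using Rabs_pos.
    unfold Fq. eapply Rle_trans; [apply Fv_lip; auto|]. destruct (Hb s Hs).
    apply Rmult_le_compat_l; [apply LL_pos; auto|lra].
Qed.

Definition R0 (alpha u0 : R) := Rmin (Rmin (1/4) (u0/4)) (/ (4 * LL alpha u0)).

Lemma R0_props alpha u0 : 0 < u0 -> alpha <> 0 ->
  0 < R0 alpha u0 /\ R0 alpha u0 <= 1/4 /\ R0 alpha u0 <= u0/4 /\
  R0 alpha u0 * LL alpha u0 <= 1/4 /\ R0 alpha u0 * MM alpha u0 <= 1/2.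
Proof.
  intros Hu Ha. assert (HA : 0 < Rabs alpha) by (apply Rabs_pos_lt; auto).
  assert (Hc : 0 < cc u0) by (unfold cc; lra).
  assert (Hi : 0 < / cc u0) by (apply Rinv_0_lt_compat; lra).
  assert (Hi2 : 0 < 2 / (cc u0 * cc u0)) by (apply Rdiv_lt_0_compat; nra).
  assert (HL : 0 < LL alpha u0) by (unfold LL; apply Rmult_lt_0_compat; lra).
  assert (HML : MM alpha u0 <= 2 * LL alpha u0) by (unfold MM, LL; unfold Rdiv; nra).
  assert (H4 : 0 < / (4 * LL alpha u0)) by (apply Rinv_0_lt_compat; lra).
  unfold R0. set (m := Rmin (Rmin (1/4) (u0/4)) (/ (4 * LL alpha u0))).
  assert (m1 : m <= Rmin (1/4) (u0/4)) by apply Rmin_l.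
  assert (m2 : m <= / (4 * LL alpha u0)) by apply Rmin_r.
  assert (m3 : Rmin (1/4) (u0/4) <= 1/4) by apply Rmin_l.
  assert (m4 : Rmin (1/4) (u0/4) <= u0/4) by apply Rmin_r.
  assert (m0 : 0 < m) by (unfold m; repeat apply Rmin_glb_lt; lra).
  assert (mL : m * LL alpha u0 <= 1/4).
  { apply Rle_trans with (/ (4 * LL alpha u0) * LL alpha u0).
    - apply Rmult_le_compat_r; lra.
    - right. field. lra. }
  repeat split; try lra. nra.
Qed.

Lemma it_cont alpha u0 v n : 0 < u0 ->
  (forall x, continuous (fst (it alpha u0 v n)) x) /\ (forall x, continuous (snd (it alpha u0 v n)) x).
Proof.
  intros Hu. induction n as [|n [IH1 IH2]]; simpl.
  - split; intros; apply cont_const.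
  - split.
    + apply stepU_cont; auto.
    + apply stepP_cont; auto.
Qed.

Lemma it_bounds alpha u0 v n r : 0 < u0 ->
  Rabs (fst (it alpha u0 v n) r - v) <= Rabs r /\ Rabs (snd (it alpha u0 v n) r) <= MM alpha u0 * Rabs r.
Proof.
  intros Hu. destruct n as [|n]; simpl.
  - rewrite Rminus_diag, Rabs_R0. split; [apply Rabs_pos|].
    apply Rmult_le_pos; [|apply Rabs_pos]. eapply Rle_trans; [apply Rabs_pos|apply (Fv_bound alpha u0 0 0 Hu)].
  - destruct (it_cont alpha u0 v n Hu) as [H1 H2]. split.
    + apply stepU_bound; auto.
    + apply stepP_bound; auto.
Qed.

Lemma it_cauchy alpha u0 v n : 0 < u0 -> alpha <> 0 -> forall r, Rabs r <= R0 alpha u0 ->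
  Rabs (fst (it alpha u0 v (S n)) r - fst (it alpha u0 v n) r) <= (/2)^n /\
  Rabs (snd (it alpha u0 v (S n)) r - snd (it alpha u0 v n) r) <= (/2)^n.
Proof.
  intros Hu Ha. destruct (R0_props alpha u0 Hu Ha) as [P0 [P1 [P2 [P3 P4]]]].
  assert (HL := LL_pos alpha u0 Hu).
  induction n as [|n IH]; intros r Hr.
  - destruct (it_bounds alpha u0 v 1 r Hu) as [B1 B2]. simpl pow. simpl fst; simpl snd.
    simpl fst in B1. simpl snd in B2. rewrite Rminus_0_r. split; [lra|].
    assert (MM alpha u0 * Rabs r <= MM alpha u0 * R0 alpha u0).
    { apply Rmult_le_compat_l; [eapply Rle_trans; [apply Rabs_pos|apply (Fv_bound alpha u0 0 0 Hu)]|lra]. }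
    lra.
  - destruct (it_cont alpha u0 v n Hu) as [C1 C2].
    destruct (it_cont alpha u0 v (S n) Hu) as [C3 C4].
    assert (Hq : 0 < (/2)^n) by (apply pow_lt; lra).
    change (fst (it alpha u0 v (S (S n)))) with (stepU v (snd (it alpha u0 v (S n)))).
    change (snd (it alpha u0 v (S (S n)))) with (stepP alpha u0 (snd (it alpha u0 v (S n))) (fst (it alpha u0 v (S n)))).
    change (fst (it alpha u0 v (S n))) with (stepU v (snd (it alpha u0 v n))) at 2.
    change (snd (it alpha u0 v (S n))) with (stepP alpha u0 (snd (it alpha u0 v n)) (fst (it alpha u0 v n))) at 3.
    simpl pow. split.
    + eapply Rle_trans; [apply (stepU_diff v v _ _ r ((/2)^n)); auto|].
      * intros s Hs. apply IH. lra.
      * rewrite Rminus_diag, Rabs_R0. assert (Rabs r * (2 * (/2)^n) <= 1/4 * (2 * (/2)^n)) by (apply Rmult_le_compat_r; lra). lra.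
    + eapply Rle_trans; [apply (stepP_diff alpha u0 _ _ _ _ r ((/2)^n) ((/2)^n)); auto|].
      * intros s Hs. destruct (IH s ltac:(lra)). split; auto.
      * assert (Rabs r * LL alpha u0 <= 1/4).
        { apply Rle_trans with (R0 alpha u0 * LL alpha u0); auto. apply Rmult_le_compat_r; lra. }
        assert (Rabs r * (LL alpha u0 * ((/2)^n + (/2)^n)) = (Rabs r * LL alpha u0) * (2 * (/2)^n)) by ring.
        nra.
Qed.

Lemma it_dep alpha u0 v w n : 0 < u0 -> alpha <> 0 -> forall r, Rabs r <= R0 alpha u0 ->
  Rabs (fst (it alpha u0 w n) r - fst (it alpha u0 v n) r) <= 2 * Rabs (w - v) /\
  Rabs (snd (it alpha u0 w n) r - snd (it alpha u0 v n) r) <= 2 * Rabs (w - v).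
Proof.
  intros Hu Ha. destruct (R0_props alpha u0 Hu Ha) as [P0 [P1 [P2 [P3 P4]]]].
  assert (HL := LL_pos alpha u0 Hu). assert (Hwv := Rabs_pos (w - v)).
  induction n as [|n IH]; intros r Hr.
  - simpl. rewrite Rminus_diag, Rabs_R0. split; lra.
  - destruct (it_cont alpha u0 v n Hu) as [C1 C2].
    destruct (it_cont alpha u0 w n Hu) as [C3 C4].
    change (fst (it alpha u0 w (S n))) with (stepU w (snd (it alpha u0 w n))).
    change (fst (it alpha u0 v (S n))) with (stepU v (snd (it alpha u0 v n))).
    change (snd (it alpha u0 w (S n))) with (stepP alpha u0 (snd (it alpha u0 w n)) (fst (it alpha u0 w n))).
    change (snd (it alpha u0 v (S n))) with (stepP alpha u0 (snd (it alpha u0 v n)) (fst (it alpha u0 v n))).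
    split.
    + eapply Rle_trans; [apply (stepU_diff w v _ _ r (2 * Rabs (w - v))); auto|].
      * intros s Hs. apply IH. lra.
      * assert (Rabs r * (2 * (2 * Rabs (w - v))) <= 1/4 * (2 * (2 * Rabs (w - v)))) by (apply Rmult_le_compat_r; lra). lra.
    + eapply Rle_trans; [apply (stepP_diff alpha u0 _ _ _ _ r (2 * Rabs (w - v)) (2 * Rabs (w - v))); auto|].
      * intros s Hs. destruct (IH s ltac:(lra)). split; auto.
      * assert (Rabs r * LL alpha u0 <= 1/4).
        { apply Rle_trans with (R0 alpha u0 * LL alpha u0); auto. apply Rmult_le_compat_r; lra. }
        assert (Rabs r * (LL alpha u0 * (2 * Rabs (w - v) + 2 * Rabs (w - v))) = (Rabs r * LL alpha u0) * (4 * Rabs (w - v))) by ring.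
        nra.
Qed.

Lemma lim_of (x : nat -> R) : (forall n, Rabs (x (S n) - x n) <= (/2)^n) ->
  is_lim_seq x (real (Lim_seq x)) /\ forall n, Rabs (x n - real (Lim_seq x)) <= 2 * (/2)^n.
Proof.
  intros H. destruct (geom_lim x H) as [l [Hl Hb]].
  rewrite (is_lim_seq_unique _ _ Hl). simpl. split; auto.
Qed.

Lemma lim_eq (x : nat -> R) (l a C : R) : is_lim_seq x l -> (forall n, Rabs (x n - a) <= C * (/2)^n) -> l = a.
Proof.
  intros Hl Hb.
  assert (G : is_lim_seq (fun n => C * (/2)^n) 0).
  { replace (Finite 0) with (Rbar_mult C 0) by (simpl; f_equal; ring).
    apply is_lim_seq_scal_l. apply is_lim_seq_geom. rewrite Rabs_right; lra. }
  assert (Ha : is_lim_seq x a).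
  { apply is_lim_seq_le_le with (u := fun n => a - C * (/2)^n) (w := fun n => a + C * (/2)^n).
    - intros n. specialize (Hb n). revert Hb. unfold Rabs; destruct Rcase_abs; lra.
    - replace (Finite a) with (Finite (a - 0)) by (f_equal; ring). apply is_lim_seq_minus'; auto. apply is_lim_seq_const.
    - replace (Finite a) with (Finite (a + 0)) by (f_equal; ring). apply is_lim_seq_plus'; auto. apply is_lim_seq_const. }
  apply is_lim_seq_unique in Hl. apply is_lim_seq_unique in Ha. rewrite Hl in Ha. injection Ha. auto.
Qed.

Definition Ul (alpha u0 v r : R) := real (Lim_seq (fun n => fst (it alpha u0 v n) r)).
Definition Pl (alpha u0 v r : R) := real (Lim_seq (fun n => snd (it alpha u0 v n) r)).

Lemma Ul_lim alpha u0 v r : 0 < u0 -> alpha <> 0 -> Rabs r <= R0 alpha u0 ->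
  (is_lim_seq (fun n => fst (it alpha u0 v n) r) (Ul alpha u0 v r) /\
   forall n, Rabs (fst (it alpha u0 v n) r - Ul alpha u0 v r) <= 2 * (/2)^n) /\
  (is_lim_seq (fun n => snd (it alpha u0 v n) r) (Pl alpha u0 v r) /\
   forall n, Rabs (snd (it alpha u0 v n) r - Pl alpha u0 v r) <= 2 * (/2)^n).
Proof.
  intros Hu Ha Hr. split; apply lim_of; intros n; apply (it_cauchy alpha u0 v n Hu Ha r Hr).
Qed.

Lemma Ul_bounds alpha u0 v r : 0 < u0 -> alpha <> 0 -> Rabs r <= R0 alpha u0 ->
  Rabs (Ul alpha u0 v r - v) <= Rabs r /\ Rabs (Pl alpha u0 v r) <= MM alpha u0 * Rabs r.
Proof.
  intros Hu Ha Hr. destruct (Ul_lim alpha u0 v r Hu Ha Hr) as [[L1 _] [L2 _]]. split.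
  - apply (lim_bound _ _ _ _ L1). intros n. apply it_bounds; auto.
  - rewrite <- (Rminus_0_r (Pl alpha u0 v r)). apply (lim_bound _ _ _ _ L2). intros n. rewrite Rminus_0_r. apply it_bounds; auto.
Qed.

Lemma Ul_dep alpha u0 v w r : 0 < u0 -> alpha <> 0 -> Rabs r <= R0 alpha u0 ->
  Rabs (Ul alpha u0 w r - Ul alpha u0 v r) <= 2 * Rabs (w - v) /\
  Rabs (Pl alpha u0 w r - Pl alpha u0 v r) <= 2 * Rabs (w - v).
Proof.
  intros Hu Ha Hr. destruct (Ul_lim alpha u0 v r Hu Ha Hr) as [[L1 _] [L2 _]].
  destruct (Ul_lim alpha u0 w r Hu Ha Hr) as [[L3 _] [L4 _]]. split.
  - rewrite <- (Rminus_0_r (_ - _)). apply (lim_bound _ _ _ _ (is_lim_seq_minus' _ _ _ _ L3 L1)).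
    intros n. rewrite Rminus_0_r. apply it_dep; auto.
  - rewrite <- (Rminus_0_r (_ - _)). apply (lim_bound _ _ _ _ (is_lim_seq_minus' _ _ _ _ L4 L2)).
    intros n. rewrite Rminus_0_r. apply it_dep; auto.
Qed.

Lemma Ul_cont alpha u0 v x : 0 < u0 -> alpha <> 0 -> Rabs x < R0 alpha u0 ->
  continuous (Ul alpha u0 v) x /\ continuous (Pl alpha u0 v) x.
Proof.
  intros Hu Ha Hx. assert (He : 0 < R0 alpha u0 - Rabs x) by lra.
  assert (Hy : forall y, Rabs (y - x) < R0 alpha u0 - Rabs x -> Rabs y <= R0 alpha u0).
  { intros y. unfold Rabs; repeat destruct Rcase_abs; lra. }
  split.
  - apply (unif_cont (fun n => fst (it alpha u0 v n)) _ x _ 2 He).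
    + intros n. apply it_cont; auto.
    + intros n y Hyx. apply (Ul_lim alpha u0 v y Hu Ha (Hy y Hyx)).
  - apply (unif_cont (fun n => snd (it alpha u0 v n)) _ x _ 2 He).
    + intros n. apply it_cont; auto.
    + intros n y Hyx. apply (Ul_lim alpha u0 v y Hu Ha (Hy y Hyx)).
Qed.

Lemma Ul_fix alpha u0 v r : 0 < u0 -> alpha <> 0 -> Rabs r < R0 alpha u0 ->
  Ul alpha u0 v r = stepU v (Pl alpha u0 v) r /\
  Pl alpha u0 v r = stepP alpha u0 (Pl alpha u0 v) (Ul alpha u0 v) r.
Proof.
  intros Hu Ha Hr. destruct (Ul_lim alpha u0 v r Hu Ha ltac:(lra)) as [[L1 _] [L2 _]].
  apply is_lim_seq_incr_1 in L1. apply is_lim_seq_incr_1 in L2.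
  assert (Hc : forall s, Rabs s <= Rabs r -> continuous (Ul alpha u0 v) s /\ continuous (Pl alpha u0 v) s).
  { intros s Hs. apply Ul_cont; auto. lra. }
  assert (Hb : forall n s, Rabs s <= Rabs r ->
     Rabs (snd (it alpha u0 v n) s - Pl alpha u0 v s) <= 2 * (/2)^n /\
     Rabs (fst (it alpha u0 v n) s - Ul alpha u0 v s) <= 2 * (/2)^n).
  { intros n s Hs. destruct (Ul_lim alpha u0 v s Hu Ha ltac:(lra)) as [[_ B1] [_ B2]]. auto. }
  assert (HL := LL_pos alpha u0 Hu).
  split.
  - apply (lim_eq _ _ _ (4 * Rabs r) L1). intros n.
    change (fst (it alpha u0 v (S n)) r) with (stepU v (snd (it alpha u0 v n)) r).
    eapply Rle_trans; [apply (stepU_diff v v _ _ r (2 * (/2)^n))|].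
    + intros s _. apply it_cont; auto.
    + intros s Hs. apply Hc; auto.
    + intros s Hs. apply Hb; auto.
    + rewrite Rminus_diag, Rabs_R0. right. ring.
  - apply (lim_eq _ _ _ (4 * Rabs r * LL alpha u0) L2). intros n.
    change (snd (it alpha u0 v (S n)) r) with (stepP alpha u0 (snd (it alpha u0 v n)) (fst (it alpha u0 v n)) r).
    eapply Rle_trans; [apply (stepP_diff alpha u0 _ _ _ _ r (2 * (/2)^n) (2 * (/2)^n)) | ]; [exact Hu| | |].
    + intros s Hs. destruct (Hc s Hs). destruct (it_cont alpha u0 v n Hu). repeat split; auto.
    + intros s Hs. destruct (Hb n s Hs). split; auto.
    + right. ring.
Qed.

Definition gq' (p : R) := / (hq p * hq p * hq p).
Lemma gq_deriv p : is_derive gq p (gq' p).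
Proof.
  unfold gq, gq', hq. assert (H0 : 0 < 1 + p^2) by nra. assert (H1 := sqrt_lt_R0 _ H0).
  assert (E : sqrt (1 + p^2) * sqrt (1 + p^2) = 1 + p^2) by (apply sqrt_sqrt; lra).
  auto_derive.
  - replace (p * (p * 1)) with (p^2) by ring. repeat split; lra.
  - replace (p * (p * 1)) with (p^2) by ring. set (S := sqrt (1 + p^2)) in *.
    replace (/ (S*S*S)) with ((S*S - p^2) / (S*S*S)) by (rewrite E; field; lra). field; lra.
Qed.
Lemma gq'_cont p : continuous gq' p.
Proof.
  apply (ex_derive_continuous (K:=R_AbsRing) (V:=R_NormedModule)). unfold gq', hq.
  assert (H0 : 0 < 1 + p^2) by nra. assert (H1 := sqrt_lt_R0 _ H0).
  auto_derive. replace (p * (p * 1)) with (p^2) by ring. repeat split; try lra.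
  assert (0 < sqrt (1 + p ^ 2) * sqrt (1 + p ^ 2) * sqrt (1 + p ^ 2)) by (repeat apply Rmult_lt_0_compat; lra). lra.
Qed.
Lemma sq_id p : sqrt (1 - gq p ^ 2) = / hq p.
Proof.
  unfold gq, hq. assert (H0 : 0 < 1 + p^2) by nra. assert (H1 := sqrt_lt_R0 _ H0).
  assert (E : sqrt (1 + p^2) * sqrt (1 + p^2) = 1 + p^2) by (apply sqrt_sqrt; lra).
  set (S := sqrt (1 + p^2)) in *.
  replace (1 - (p / S) ^ 2) with (/ S * / S). 2:{ replace (1 - (p / S) ^ 2) with ((S * S - p^2) / (S * S)) by (field; lra). rewrite E. replace (1 + p^2 - p^2) with 1 by ring. rewrite <- E. field. lra. }
  apply sqrt_square. left. apply Rinv_0_lt_compat. lra.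
Qed.

Definition Fl alpha u0 v := Fq alpha u0 (Pl alpha u0 v) (Ul alpha u0 v).
Definition mI alpha u0 v y := RInt (fun s => s * Fl alpha u0 v s) 0 y.
Definition dP alpha u0 v r :=
  if Req_EM_T r 0 then Fl alpha u0 v 0 / 2 else Fl alpha u0 v r - Pl alpha u0 v r / r.

Lemma is_derive_cplus (g : R -> R) c x l : is_derive g x l -> is_derive (fun y => c + g y) x l.
Proof.
  intros H. assert (H' := is_derive_plus (fun _ => c) g x 0 l (is_derive_const c x) H).
  unfold plus in H'; simpl in H'. rewrite Rplus_0_l in H'. exact H'.
Qed.

Lemma ball_R0 alpha u0 x : Rabs x < R0 alpha u0 ->
  exists e : posreal, forall y, Rabs (y - x) < e -> Rabs y < R0 alpha u0.
Proof.
  intros Hx. assert (He : 0 < R0 alpha u0 - Rabs x) by lra. exists (mkposreal _ He). simpl.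
  intros y. unfold Rabs; repeat destruct Rcase_abs; lra.
Qed.


Lemma Fl_cont alpha u0 v x : 0 < u0 -> alpha <> 0 -> Rabs x < R0 alpha u0 -> continuous (Fl alpha u0 v) x.
Proof. intros Hu Ha Hx. destruct (Ul_cont alpha u0 v x Hu Ha Hx). apply cont_Fq; auto. Qed.

Lemma Pl_eq alpha u0 v y : 0 < u0 -> alpha <> 0 -> Rabs y < R0 alpha u0 -> Pl alpha u0 v y = mI alpha u0 v y / y.
Proof. intros Hu Ha Hy. apply (Ul_fix alpha u0 v y Hu Ha Hy). Qed.

Lemma Pl_0 alpha u0 v : 0 < u0 -> alpha <> 0 -> Pl alpha u0 v 0 = 0.
Proof.
  intros Hu Ha. destruct (R0_props alpha u0 Hu Ha) as [P0 _].
  rewrite Pl_eq by (auto; rewrite Rabs_R0; lra). unfold mI, Rdiv. rewrite Rinv_0. apply Rmult_0_r.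
Qed.

Lemma Ul_0 alpha u0 v : 0 < u0 -> alpha <> 0 -> Ul alpha u0 v 0 = v.
Proof.
  intros Hu Ha. destruct (R0_props alpha u0 Hu Ha) as [P0 _].
  rewrite (proj1 (Ul_fix alpha u0 v 0 Hu Ha ltac:(rewrite Rabs_R0; lra))). unfold stepU.
  rewrite RInt_point. unfold zero; simpl. ring.
Qed.

Lemma Ul_deriv alpha u0 v x : 0 < u0 -> alpha <> 0 -> Rabs x < R0 alpha u0 ->
  is_derive (Ul alpha u0 v) x (gq (Pl alpha u0 v x)).
Proof.
  intros Hu Ha Hx.
  apply is_derive_ext_loc with (f := fun y => v + RInt (fun s => gq (Pl alpha u0 v s)) 0 y).
  - destruct (ball_R0 alpha u0 x Hx) as [e He]. exists e. intros y Hy.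
    symmetry. apply (Ul_fix alpha u0 v y Hu Ha). apply He. exact Hy.
  - apply is_derive_cplus. apply (RInt_deriv (fun s => gq (Pl alpha u0 v s)) (R0 alpha u0)); auto.
    intros s Hs. apply cont_gq. apply Ul_cont; auto.
Qed.

Lemma mI_deriv alpha u0 v x : 0 < u0 -> alpha <> 0 -> Rabs x < R0 alpha u0 ->
  is_derive (mI alpha u0 v) x (x * Fl alpha u0 v x).
Proof.
  intros Hu Ha Hx. unfold mI.
  apply (RInt_deriv (fun s => s * Fl alpha u0 v s) (R0 alpha u0)); auto.
  intros s Hs. apply cont_mult; [apply cont_id|apply Fl_cont; auto].
Qed.

Lemma Pl_deriv alpha u0 v x : 0 < u0 -> alpha <> 0 -> Rabs x < R0 alpha u0 ->
  is_derive (Pl alpha u0 v) x (dP alpha u0 v x).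
Proof.
  intros Hu Ha Hx. destruct (R0_props alpha u0 Hu Ha) as [P0 _].
  unfold dP. destruct (Req_EM_T x 0) as [->|Hx0].
  - apply is_derive_Reals. intros eps He.
    destruct (avg_lim (Fl alpha u0 v) (R0 alpha u0) P0 (fun s Hs => Fl_cont alpha u0 v s Hu Ha Hs) eps He) as [d [Hd Hd']].
    assert (Hd2 : 0 < Rmin d (R0 alpha u0)) by (apply Rmin_glb_lt; auto).
    exists (mkposreal _ Hd2). intros h Hh Hhd. simpl in Hhd.
    assert (Hh1 := Rlt_le_trans _ _ _ Hhd (Rmin_l _ _)). assert (Hh2 := Rlt_le_trans _ _ _ Hhd (Rmin_r _ _)).
    rewrite Rplus_0_l, Pl_0 by auto. rewrite Rminus_0_r.
    rewrite Pl_eq by auto. replace (mI alpha u0 v h / h / h) with (mI alpha u0 v h / (h * h)) by (field; auto).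
    apply Hd'; auto.
  - apply is_derive_ext_loc with (f := fun y => mI alpha u0 v y / y).
    + destruct (ball_R0 alpha u0 x Hx) as [e He]. exists e. intros y Hy.
      symmetry. exact (Pl_eq alpha u0 v y Hu Ha (He y Hy)).
    + replace (Fl alpha u0 v x - Pl alpha u0 v x / x) with ((x * Fl alpha u0 v x * x - mI alpha u0 v x * 1) / x ^ 2).
      * apply is_derive_div; auto. apply mI_deriv; auto. auto_derive; auto.
      * rewrite Pl_eq by auto. field. auto.
Qed.

Lemma dP_cont alpha u0 v x : 0 < u0 -> alpha <> 0 -> Rabs x < R0 alpha u0 ->
  continuous (dP alpha u0 v) x.
Proof.
  intros Hu Ha Hx. destruct (R0_props alpha u0 Hu Ha) as [P0 _].
  destruct (Req_dec x 0) as [->|Hx0].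
  - apply cont_eps. intros eps He.
    assert (HF := Fl_cont alpha u0 v 0 Hu Ha Hx). rewrite cont_eps in HF.
    destruct (HF (eps/2) ltac:(lra)) as [d1 [Hd1 H1]].
    destruct (avg_lim (Fl alpha u0 v) (R0 alpha u0) P0 (fun s Hs => Fl_cont alpha u0 v s Hu Ha Hs) (eps/2) ltac:(lra)) as [d2 [Hd2 H2]].
    exists (Rmin (Rmin d1 d2) (R0 alpha u0)). split; [apply Rmin_glb_lt; [apply Rmin_glb_lt|]; auto|].
    intros y Hy. rewrite Rminus_0_r in Hy.
    assert (Hy1 : Rabs y < d1) by (eapply Rlt_le_trans; [exact Hy|]; eapply Rle_trans; apply Rmin_l).
    assert (Hy2 : Rabs y < d2) by (eapply Rlt_le_trans; [exact Hy|]; eapply Rle_trans; [apply Rmin_l|apply Rmin_r]).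
    assert (Hy3 : Rabs y < R0 alpha u0) by (eapply Rlt_le_trans; [exact Hy|]; apply Rmin_r).
    unfold dP. destruct (Req_EM_T 0 0) as [_|C]; [|congruence].
    destruct (Req_EM_T y 0) as [->|Hy0].
    + rewrite Rminus_diag, Rabs_R0. lra.
    + rewrite Pl_eq by auto.
      replace (Fl alpha u0 v y - mI alpha u0 v y / y / y - Fl alpha u0 v 0 / 2)
        with ((Fl alpha u0 v y - Fl alpha u0 v 0) - (mI alpha u0 v y / (y * y) - Fl alpha u0 v 0 / 2)) by (field; auto).
      eapply Rle_lt_trans; [apply Rabs_triang|]. rewrite Rabs_Ropp.
      assert (A1 := H1 y ltac:(rewrite Rminus_0_r; auto)). assert (A2 := H2 y Hy0 Hy2). unfold mI. lra.
  - apply continuous_ext_loc with (g := fun y => Fl alpha u0 v y - Pl alpha u0 v y * / y).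
    + assert (He : 0 < Rabs x) by (apply Rabs_pos_lt; auto). exists (mkposreal _ He). intros y Hy.
      change (Rabs (y - x) < Rabs x) in Hy. unfold dP. destruct (Req_EM_T y 0) as [->|_].
      * exfalso. rewrite Rminus_0_l, Rabs_Ropp in Hy. lra.
      * reflexivity.
    + apply cont_minus; [apply Fl_cont; auto|]. apply cont_mult; [apply Ul_cont; auto|].
      apply continuous_Rinv; auto.
Qed.

Lemma U1_deriv alpha u0 v x : 0 < u0 -> alpha <> 0 -> Rabs x < R0 alpha u0 ->
  is_derive (fun r => gq (Pl alpha u0 v r)) x (gq' (Pl alpha u0 v x) * dP alpha u0 v x).
Proof.
  intros Hu Ha Hx. rewrite Rmult_comm.
  apply (is_derive_comp gq (Pl alpha u0 v) x). apply gq_deriv. apply Pl_deriv; auto.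
Qed.

Lemma U2_cont alpha u0 v x : 0 < u0 -> alpha <> 0 -> Rabs x < R0 alpha u0 ->
  continuous (fun r => gq' (Pl alpha u0 v r) * dP alpha u0 v r) x.
Proof.
  intros Hu Ha Hx. apply cont_mult.
  - apply (continuous_comp (Pl alpha u0 v) gq'). apply Ul_cont; auto. apply gq'_cont.
  - apply dP_cont; auto.
Qed.

Lemma div_id (s p h : R) : h <> 0 -> s * p = s * (p / h) / / h.
Proof. intros. field. auto. Qed.

Lemma mul_div_id (y a : R) : y <> 0 -> a = y * (a / y).
Proof. intros. field. auto. Qed.

Lemma zero_id : 0 = 0 * 0.
Proof. ring. Qed.

Lemma ode_eq alpha u0 v r : 0 < u0 -> alpha <> 0 -> Rabs (v - u0) < u0 / 4 -> Rabs r < R0 alpha u0 ->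
  is_derive (fun s => s * gq (Pl alpha u0 v s) / sqrt (1 - gq (Pl alpha u0 v s) ^ 2)) r
    (r * alpha / (Ul alpha u0 v r * sqrt (1 - gq (Pl alpha u0 v r) ^ 2))).
Proof.
  intros Hu Ha Hv Hr. destruct (R0_props alpha u0 Hu Ha) as [P0 [P1 [P2 [P3 P4]]]].
  destruct (Ul_bounds alpha u0 v r Hu Ha ltac:(lra)) as [B1 B2].
  assert (HM : 0 <= MM alpha u0) by (eapply Rle_trans; [apply Rabs_pos|apply (Fv_bound alpha u0 0 0 Hu)]).
  assert (Hp : Rabs (Pl alpha u0 v r) <= 1).
  { eapply Rle_trans; [exact B2|]. assert (MM alpha u0 * Rabs r <= MM alpha u0 * R0 alpha u0) by (apply Rmult_le_compat_l; lra). lra. }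
  assert (HU : u0 / 2 < Ul alpha u0 v r).
  { revert B1 Hv Hr. unfold Rabs; repeat destruct Rcase_abs; lra. }
  apply is_derive_ext with (f := fun s => s * Pl alpha u0 v s).
  { intros s. rewrite sq_id. unfold gq. destruct (hq_facts (Pl alpha u0 v s)) as [_ [H1 _]]. apply div_id. lra. }
  apply is_derive_ext_loc with (f := mI alpha u0 v).
  { destruct (ball_R0 alpha u0 r Hr) as [e He]. exists e. intros y Hy.
    assert (Hy' := He y Hy). destruct (Req_dec y 0) as [->|Hy0].
    - rewrite Pl_0 by auto. unfold mI. rewrite RInt_point. unfold zero; simpl. apply zero_id.
    - rewrite Pl_eq by auto. apply mul_div_id. auto. }
  replace (r * alpha / (Ul alpha u0 v r * sqrt (1 - gq (Pl alpha u0 v r) ^ 2))) with (r * Fl alpha u0 v r).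
  - apply mI_deriv; auto.
  - rewrite sq_id. unfold Fl, Fq, Fv. rewrite clp_id by auto.
    rewrite Rmax_left by (unfold cc; lra).
    destruct (hq_facts (Pl alpha u0 v r)) as [_ [H1 _]]. field. split; lra.
Qed.

Theorem theorem3p2 (alpha u0 : R) (Halpha : alpha <> 0) (Hu0 : 0 < u0) :
  exists (delta eta : R) (U U1 : R -> R -> R),
    0 < delta /\ 0 < eta /\
    (forall v0, Rabs (v0 - u0) < eta -> is_solution alpha v0 delta (U v0) (U1 v0)) /\
    (forall v0, Rabs (v0 - u0) < eta ->
       forall eps, 0 < eps -> exists rho, 0 < rho /\
         forall w0, Rabs (w0 - u0) < eta -> Rabs (w0 - v0) < rho ->
           forall r, Icc 0 delta r ->
             Rabs (U w0 r - U v0 r) < eps /\ Rabs (U1 w0 r - U1 v0 r) < eps).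
Proof.
  destruct (R0_props alpha u0 Hu0 Halpha) as [P0 [P1 [P2 [P3 P4]]]].
  exists (R0 alpha u0 / 2), (u0 / 4), (Ul alpha u0), (fun v r => gq (Pl alpha u0 v r)).
  split; [lra|]. split; [lra|]. split.
  - intros v0 Hv.
    assert (Hin : forall r, Icc 0 (R0 alpha u0 / 2) r -> Rabs r < R0 alpha u0)
      by (unfold Icc; intros r Hr; rewrite Rabs_right; lra).
    unfold is_solution. split; [|split; [|split; [|split]]].
    + exists (fun r => gq' (Pl alpha u0 v0 r) * dP alpha u0 v0 r). intros x Hx. specialize (Hin x Hx).
      split; [|split].
      * apply deriv_within. apply Ul_deriv; auto.
      * apply deriv_within. apply U1_deriv; auto.
      * apply cont_within. apply U2_cont; auto.
    + intros r Hr. specialize (Hin r Hr). split.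
      * destruct (Ul_bounds alpha u0 v0 r Hu0 Halpha ltac:(lra)) as [B1 _].
        revert B1 Hv Hin. unfold Rabs; repeat destruct Rcase_abs; lra.
      * apply gq_bound.
    + intros r Hr. apply ode_eq; auto. rewrite Rabs_right; lra.
    + apply Ul_0; auto.
    + rewrite Pl_0 by auto. unfold gq. unfold Rdiv. apply Rmult_0_l.
  - intros v0 Hv eps He. exists (eps / 5). split; [lra|]. intros w0 Hw Hwv r Hr.
    assert (Hr' : Rabs r <= R0 alpha u0) by (unfold Icc in Hr; rewrite Rabs_right; lra).
    destruct (Ul_dep alpha u0 v0 w0 r Hu0 Halpha Hr') as [D1 D2]. split; [lra|].
    eapply Rle_lt_trans; [apply gq_lip|]. lra.
Qed.
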